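(* Let $L \in K[D]$ with $\operatorname{ord}(L)=d$ and $\operatorname{Sym}_L=S_1S_2$, where $S_1,S_2$ are homogeneous of degrees $d_1,d_2$, and let $S_0=\gcd(S_1,S_2)$ have degree $d_0$. Let $t$ be an integer with $1\le t\le d-d_0$, and let $F_1\circ F_2$ be a partial factorization of $L$ of order $t$ and type $(S_1)(S_2)$. Then there is at most one, up to lower order terms, extension of $F_1\circ F_2$ to a partial factorization of order $t-1$ of the same type. That is: if $F_1'\circ F_2'$ and $F_1''\circ F_2''$ are partial factorizations of $L$ of order $t-1$ and type $(S_1)(S_2)$, both extensions of $F_1\circ F_2$, then $\operatorname{ord}(F_i'-F_i'')<(t-1)-(d-d_i)$ for $i=1,2$.
   Context: $K$ is a field with commuting derivations $\partial_1,\dots,\partial_n$, and $K[D]=K[D_1,\dots,D_n]$ is the ring of linear differential operators over $K$: the $D_i$ commute with each other and $D_i\circ a=aD_i+\partial_i(a)$ for $a\in K$. Every $L\in K[D]$ is uniquely $\sum_{|J|\le d}a_JD^J$ with $a_J\in K$ and $D^J=D_1^{j_1}\cdots D_n^{j_n}$. The order $\operatorname{ord}(L)$ is the largest $|J|=j_1+\dots+j_n$ with $a_J\ne0$, and $\operatorname{ord}(0)=-\infty$. The symbol $\operatorname{Sym}_L=\sum_{|J|=\operatorname{ord}L}a_JX^J\in K[X_1,\dots,X_n]$. For $t\in\{0,\dots,\operatorname{ord}L\}$, a partial factorization of $L$ of order $t$ and type $(S_1)(S_2)$ is a composition $F_1\circ F_2$ with $\operatorname{Sym}_{F_i}=S_i$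 and $\operatorname{ord}(L-F_1\circ F_2)<t$. If $F_1\circ F_2$ and $F_1'\circ F_2'$ are partial factorizations of orders $t$ and $t'<t$, the latter is an extension of the former if $\operatorname{ord}(F_i-F_i')<t-(d-d_i)$ for $i=1,2$, where $d=\operatorname{ord}L$ and $d_i=\deg S_i$. *)

(* Defs.v *)
From HB Require Import structures.
From mathcomp Require Import all_boot all_order all_algebra.
From mathcomp Require Import mpoly.
Set Implicit Arguments. Unset Strict Implicit. Unset Printing Implicit Defensive.
Import Order.TTheory GRing.Theory Num.Theory.
Local Open Scope ring_scope.

(* The ring K[D] = K[D_1,...,D_n] of linear differential operators over a field K
   with derivations der 0, ..., der (n-1).  An operator L = \sum_J a_J D^J (normal
   form, coefficients on the left) is represented by the element
   \sum_J a_J 'X_[J] of {mpoly K[n]}: the additive structure, coefficients a_J = L@_J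
   and the multi-indices J are those of the normal form.  The (noncommutative)
   composition is defined below from the defining relations
     D_i D_j = D_j D_i,   D_i o a = a D_i + der i a. *)

Section DiffOps.
Variables (K : fieldType) (n : nat) (der : 'I_n -> K -> K).

Definition commuting_derivations : Prop :=
  [/\ forall i a b, der i (a + b) = der i a + der i b,
      forall i a b, der i (a * b) = der i a * b + a * der i b
    & forall i j a, der i (der j a) = der j (der i a)].

Definition coef_der (i : 'I_n) (P : {mpoly K[n]}) : {mpoly K[n]} :=
  \sum_(m <- msupp P) der i P@_m *: 'X_[m].

(* left composition by D_i:  D_i o (\sum_M b_M D^M) = \sum_M (b_M D^(M+e_i) + der i b_M D^M) *)
Definition lcompD (i : 'I_n) (P : {mpoly K[n]}) : {mpoly K[n]} :=
  P * 'X_i + coef_der i P.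

Definition lcompDJ (J : 'X_{1..n}) (P : {mpoly K[n]}) : {mpoly K[n]} :=
  foldr (fun i Q => iter (J i) (lcompD i) Q) P (enum 'I_n).

Definition dcomp (L P : {mpoly K[n]}) : {mpoly K[n]} :=
  \sum_(J <- msupp L) L@_J *: lcompDJ J P.

End DiffOps.

(* ord(L) < k, for k an integer, with the convention ord(0) = -oo *)
Definition ord_lt (K : fieldType) (n : nat) (L : {mpoly K[n]}) (k : int) : Prop :=
  forall J, J \in msupp L -> (mdeg J)%:Z < k.

Definition ord_eq (K : fieldType) (n : nat) (L : {mpoly K[n]}) (d : nat) : Prop :=
  L != 0 /\ msize L = d.+1.

Definition Sym (K : fieldType) (n : nat) (L : {mpoly K[n]}) : {mpoly K[n]} :=
  \sum_(J <- msupp L | mdeg J == (msize L).-1) L@_J *: 'X_[J].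

Definition mdvd (K : fieldType) (n : nat) (P Q : {mpoly K[n]}) : Prop :=
  exists R, Q = P * R.

Definition is_gcd (K : fieldType) (n : nat) (S1 S2 S0 : {mpoly K[n]}) : Prop :=
  [/\ mdvd S0 S1, mdvd S0 S2 &
      forall C, mdvd C S1 -> mdvd C S2 -> mdvd C S0].

Definition partial_fact (K : fieldType) (n : nat) (der : 'I_n -> K -> K)
    (L F1 F2 S1 S2 : {mpoly K[n]}) (t : nat) : Prop :=
  [/\ Sym F1 = S1, Sym F2 = S2 & ord_lt (L - dcomp der F1 F2) t%:Z].

Definition extends (K : fieldType) (n : nat)
    (F1 F2 F1' F2' : {mpoly K[n]}) (t d d1 d2 : nat) : Prop :=
  ord_lt (F1 - F1') (t%:Z - (d%:Z - d1%:Z)) /\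
  ord_lt (F2 - F2') (t%:Z - (d%:Z - d2%:Z)).

(* Main.v *)
Require Import Defs.
From HB Require Import structures.
From mathcomp Require Import all_boot all_order all_algebra.
From mathcomp Require Import mpoly.
From mathcomp Require Import ssrcomplements.
From Stdlib Require Import Classical.
From mathcomp Require Import ring zify.
Import Order.TTheory GRing.Theory Num.Theory.
Local Open Scope ring_scope.

Set Implicit Arguments. Unset Strict Implicit. Unset Printing Implicit Defensive.

Lemma minP (P : nat -> Prop) : (exists n, P n) ->
  exists n, P n /\ forall m, P m -> (n <= m)%N.
Proof.
move=> [n Pn].
have H : forall k, (forall j, (j < k)%N -> ~ P j) \/ exists n, P n /\ forall m, P m -> (n <= m)%N.
  elim=> [|k [IH|IH]]; [by left | | by right].
  case: (classic (P k)) => Pk.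
    right; exists k; split => // m Pm; rewrite leqNgt; apply/negP => /IH; exact.
  left => j; rewrite ltnS leq_eqVlt => /orP [/eqP -> //|/IH]; exact.
case: (H n.+1) => [/(_ n (ltnSn n))|//]; by [].
Qed.

Section Gen.
Variable R : idomainType.
Implicit Types a b c x y : R.

Definition gdvd a b := exists c, b = a * c.
Definition gprime p := [/\ p != 0, p \isn't a GRing.unit &
  forall x y, gdvd p (x * y) -> gdvd p x \/ gdvd p y].
Definition gufd := forall a, a != 0 -> exists u (s : seq R),
  [/\ u \is a GRing.unit, (forall x, x \in s -> gprime x) & a = u * \prod_(x <- s) x].

Lemma gdvd_refl a : gdvd a a. Proof. by exists 1; rewrite mulr1. Qed.
Lemma gdvd0 a : gdvd a 0. Proof. by exists 0; rewrite mulr0. Qed.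
Lemma gdvd_trans a b c : gdvd a b -> gdvd b c -> gdvd a c.
Proof. by move=> [x ->] [y ->]; exists (x * y); rewrite mulrA. Qed.
Lemma gdvd_mulr a b c : gdvd a b -> gdvd a (b * c).
Proof. by move=> [x ->]; exists (x * c); rewrite mulrA. Qed.
Lemma gdvd_mull a b c : gdvd a b -> gdvd a (c * b).
Proof. by rewrite mulrC; apply: gdvd_mulr. Qed.
Lemma gdvd_mul2 a b c : gdvd a b -> gdvd (c * a) (c * b).
Proof. by move=> [x ->]; exists x; rewrite mulrA. Qed.
Lemma gdvdD a b c : gdvd a b -> gdvd a c -> gdvd a (b + c).
Proof. by move=> [x ->] [y ->]; exists (x + y); rewrite mulrDr. Qed.
Lemma gdvdN a b : gdvd a b -> gdvd a (- b).
Proof. by move=> [x ->]; exists (- x); rewrite mulrN. Qed.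
Lemma gdvdB a b c : gdvd a b -> gdvd a c -> gdvd a (b - c).
Proof. by move=> ? ?; apply: gdvdD => //; apply: gdvdN. Qed.
Lemma gdvd_sum a (I : Type) (r : seq I) (P : pred I) (F : I -> R) :
  (forall i, P i -> gdvd a (F i)) -> gdvd a (\sum_(i <- r | P i) F i).
Proof. move=> H; elim/big_ind: _ => //; [exact: gdvd0 | exact: gdvdD]. Qed.
Lemma gdvd_unit a u : u \is a GRing.unit -> gdvd a u -> a \is a GRing.unit.
Proof. by move=> Hu [x Ex]; move: Hu; rewrite Ex unitrM => /andP[]. Qed.

Lemma gprime_prod p u (s : seq R) : gprime p -> u \is a GRing.unit ->
  gdvd p (u * \prod_(x <- s) x) -> exists2 x, x \in s & gdvd p x.
Proof.
move=> [p0 pU pP] Hu; elim: s => [|y s IH].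
  by rewrite big_nil mulr1 => /(gdvd_unit Hu); rewrite (negbTE pU).
rewrite big_cons mulrCA => /pP [Hy|/IH [x xs Hx]].
  by exists y => //; rewrite inE eqxx.
by exists x => //; rewrite inE xs orbT.
Qed.

Lemma gprime_irr x p w : gprime x -> x = p * w -> p \isn't a GRing.unit -> w \is a GRing.unit.
Proof.
move=> [x0 xU xP] Ex pU; have : gdvd x (p * w) by rewrite -Ex; apply: gdvd_refl.
move=> /xP [[z Ez]|[z Ez]].
  have E : z * w = 1.
    apply: (mulfI x0); rewrite mulr1 mulrA -Ez -Ex //.
  by move: (unitr1 R); rewrite -E unitrM => /andP[].
exfalso; move/negP: pU; apply.
have E : p * z = 1.
  by apply: (mulfI x0); rewrite mulr1 mulrCA -Ez -Ex.


by move: (unitr1 R); rewrite -E unitrM => /andP[].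
Qed.

End Gen.

Section PolyUfd.
Variable R : idomainType.
Implicit Types f g h : {poly R}.

Lemma gdvdC_coef (p : R) g : gdvd p%:P g <-> forall i, gdvd p g`_i.
Proof.
split=> [[c ->] i|H]; first by exists c`_i; rewrite coefCM.
have H' : forall i, exists c, g`_i == p * c by move=> i; have [c ->] := H i; exists c.
exists (\poly_(i < size g) xchoose (H' i)); apply/polyP => i.
rewrite coefCM coef_poly; case: ltnP => Hi; first exact/eqP/(xchooseP (H' i)).
by rewrite mulr0 nth_default.
Qed.

Lemma gprimeC_poly (p : R) g h : gprime p -> gdvd p%:P (g * h) ->
  gdvd p%:P g \/ gdvd p%:P h.
Proof.
move=> pp; have [p0 pU pP] := pp.
move=> /gdvdC_coef Hgh.
case: (classic (gdvd p%:P g)) => Hg; first by left.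
right; apply/gdvdC_coef.
have [i0 [Hi0 Hmin]] : exists i0, (~ gdvd p g`_i0) /\ forall m, ~ gdvd p g`_m -> (i0 <= m)%N.
  apply: minP; apply: NNPP => Hn; apply: Hg; apply/gdvdC_coef => i.
  by apply: NNPP => Hi; apply: Hn; exists i.
elim/ltn_ind => j IH.
have := Hgh (i0 + j)%N; rewrite coefM.
have Hlt : (i0 < (i0 + j).+1)%N by rewrite ltnS leq_addr.
rewrite (bigD1 (Ordinal Hlt)) //= addKn => Hd.
have Hrest : gdvd p (\sum_(k < (i0 + j).+1 | k != Ordinal Hlt) g`_k * h`_(i0 + j - k)).
  apply: gdvd_sum => k Hk.
  have [Hk1|Hk1] := ltnP k i0.
    apply: gdvd_mulr; apply: NNPP => Hn; have := Hmin _ Hn; by rewrite leqNgt Hk1.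
  have Hk2 : (i0 < k)%N by rewrite ltn_neqAle Hk1 andbT; apply: contraNneq Hk => e; apply/eqP; apply: val_inj => /=; exact: (esym e).
  apply: gdvd_mull; apply: IH.
  have := ltn_ord k; rewrite ltnS => Hk3.
  rewrite ltn_subLR //; rewrite ltn_add2r //.
have := gdvdB Hd Hrest; rewrite addrK => /pP [//|//].
Qed.

Definition prim f := forall p : R, gprime p -> ~ gdvd p%:P f.

Lemma polyC_gprime (p : R) : gprime p -> gprime (p%:P).
Proof.
move=> pp; have [p0 pU pP] := pp; split.
- by rewrite polyC_eq0.
- by rewrite poly_unitE size_polyC p0 coefC.
- by move=> x y; apply: gprimeC_poly.
Qed.

Lemma gauss_cancel f (s : seq R) (u : R) w z : prim f -> u \is a GRing.unit ->
  (forall x, x \in s -> gprime x) ->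
  (u * \prod_(x <- s) x)%:P * w = f * z -> gdvd f w.
Proof.
move=> pf; elim: s u w z => [|y s IH] u w z Hu Hs.
  rewrite big_nil mulr1 => E; exists (u^-1%:P * z); rewrite mulrCA -E mulrA -polyCM mulVr //.
  by rewrite mul1r.
have Hy : gprime y by apply: Hs; rewrite inE eqxx.
have [y0 _ _] := Hy.
rewrite big_cons mulrCA polyCM -mulrA => E.
have : gdvd y%:P (f * z) by rewrite -E; apply: gdvd_mulr; apply: gdvd_refl.
case/(gprimeC_poly Hy) => [/pf|[z' Ez']]; first by move/(_ Hy).
apply: (IH u w z') => //; first by move=> x xs; apply: Hs; rewrite inE xs orbT.
apply: (mulfI (_ : y%:P != 0)); first by rewrite polyC_eq0.
by rewrite E Ez' mulrCA.
Qed.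

Lemma split_fact f (s : seq R) (u : R) q r : u \is a GRing.unit ->
  (forall x, x \in s -> gprime x) ->
  (u * \prod_(x <- s) x)%:P * f = q * r ->
  exists q' r' (e : R), f = q' * r' /\ r = e%:P * r'.
Proof.
elim: s u q r => [|y s IH] u q r Hu Hs.
  rewrite big_nil mulr1 => E; exists (u^-1%:P * q), r, 1; split; last by rewrite mul1r.
  by rewrite -mulrA -E mulrA -polyCM mulVr // mul1r.
have Hy : gprime y by apply: Hs; rewrite inE eqxx.
have [y0 _ _] := Hy.
have Hs' : forall x, x \in s -> gprime x by move=> x xs; apply: Hs; rewrite inE xs orbT.
have y0' : y%:P != 0 :> {poly R} by rewrite polyC_eq0.
rewrite big_cons mulrCA polyCM -mulrA => E.
have : gdvd y%:P (q * r) by rewrite -E; apply: gdvd_mulr; apply: gdvd_refl.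
case/(gprimeC_poly Hy) => [[q' Eq']|[r' Er']].
  apply: (IH u q' r) => //; apply: (mulfI y0'); by rewrite E Eq' mulrA.
have [q'' [r'' [e [E1 E2]]]] : exists q' r'' (e : R), f = q' * r'' /\ r' = e%:P * r''.
  apply: (IH u q r') => //; apply: (mulfI y0'); by rewrite E Er' mulrCA.
by exists q'', r'', (y * e); split => //; rewrite Er' E2 polyCM mulrA.
Qed.

Hypothesis ufdR : gufd R.

Definition pirr f := forall a b, f = a * b -> a \is a GRing.unit \/ b \is a GRing.unit.

Lemma euclid_prime f : (1 < size f)%N -> prim f -> pirr f -> gprime f.
Proof.
move=> sf pf irf.
have f0 : f != 0 by rewrite -size_poly_gt0 ltnW.
split => //; first by rewrite poly_unitE negb_and (gtn_eqF sf).
move=> g h [k Ek].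
pose P (m : nat) := exists u v : {poly R}, (u * f + v * g != 0) /\ size (u * f + v * g) = m.
have [m [[u [v [r0 Er]]] Hmin]] : exists m, P m /\ forall m', P m' -> (m <= m')%N.
  by apply: minP; exists (size f), 1, 0; rewrite mul0r addr0 mul1r.
set r := u * f + v * g in r0 Er.
have Hred : forall u1 v1 : {poly R}, exists c : R, c != 0 /\ c%:P * (u1 * f + v1 * g) = ((u1 * f + v1 * g) %/ r) * r.
  move=> u1 v1; set q : {poly R} := u1 * f + v1 * g.
  exists (lead_coef r ^+ scalp q r); split; first by rewrite expf_neq0 // lead_coef_eq0.
  have E := Pdiv.Idomain.divp_eq q r.
  suff Hm : q %% r = 0 by rewrite mul_polyC E Hm addr0.
  have [//|Hm] := eqVneq (q %% r) 0.
  have : (size (q %% r)%R < size r)%N by rewrite ltn_modp.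
  rewrite Er ltnNge => /negP; case; apply: Hmin.
  exists (lead_coef r ^+ scalp q r *: u1 - (q %/ r) * u), (lead_coef r ^+ scalp q r *: v1 - (q %/ r) * v).
  suff -> : (lead_coef r ^+ scalp q r *: u1 - q %/ r * u) * f + (lead_coef r ^+ scalp q r *: v1 - q %/ r * v) * g = q %% r by [].
  apply: (addrI ((q %/ r) * r)); rewrite -E /q /r.
  rewrite -!mul_polyC; ring.
have [cf [cf0 Ef]] := Hred 1 0; rewrite mul0r addr0 mul1r in Ef.
have [cg [cg0 Eg]] := Hred 0 1; rewrite mul0r add0r mul1r in Eg.
have [Hr1|Hr2] := leqP (size r) 1.
  right; rewrite (size1_polyC Hr1) in Er r0.
  have c0 : r`_0 != 0 by rewrite polyC_eq0 in r0.
  have [uu [s [Hu Hs Ec]]] := ufdR c0.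
  apply: (@gauss_cancel f s uu h (u * h + v * k)) => //.
  rewrite -Ec -(size1_polyC Hr1) /r mulrDl.
  have -> : v * g * h = v * (f * k) by rewrite -Ek mulrA.
  ring.
left.
have [uu [s [Hu Hs Ec]]] := ufdR cf0.
move: Ef; rewrite Ec => /(split_fact Hu Hs) [q' [r' [e [E1 E2]]]].
have e0 : e != 0 by apply: contra_neq r0 => e0; rewrite E2 e0 mul0r.
have sr' : size r' = size r by rewrite E2 size_Cmul.
case: (irf _ _ E1) => [Hq|Hr]; last first.
  by move: Hr; rewrite poly_unitE sr' (gtn_eqF Hr2).
have Hfr : gdvd f r.
  exists (e%:P * q'^-1); rewrite E2 E1.
  transitivity (e%:P * r' * (q'^-1 * q')); first by rewrite (mulVr Hq) mulr1.
  ring.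
have [uu' [s' [Hu' Hs' Ec']]] := ufdR cg0.
have [z Ez] := Hfr.
apply: (@gauss_cancel f s' uu' g ((g %/ r) * z)) => //.
by rewrite -Ec' Eg Ez mulrCA.
Qed.


Lemma polyC_unitE (c : R) : (c%:P \is a GRing.unit) = (c \is a GRing.unit).
Proof.
rewrite poly_unitE size_polyC coefC /=; case: (eqVneq c 0) => [->|//].
by rewrite unitr0.
Qed.

Lemma const_prime_dvd (a : {poly R}) : (size a <= 1)%N -> a != 0 ->
  a \isn't a GRing.unit -> exists y, gprime y /\ gdvd y%:P a.
Proof.
move=> sa a0 aU; rewrite (size1_polyC sa) in a0 aU *.
have c0 : a`_0 != 0 by rewrite polyC_eq0 in a0.
have [u [[|y s] [Hu Hs Ec]]] := ufdR c0.
  by move: aU; rewrite polyC_unitE Ec big_nil mulr1 Hu.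
exists y; split; first by apply: Hs; rewrite inE eqxx.
by exists (u * \prod_(x <- s) x)%:P; rewrite Ec big_cons mulrCA polyCM.
Qed.

Definition pfact (f : {poly R}) := exists u (s : seq {poly R}),
  [/\ u \is a GRing.unit, (forall x, x \in s -> gprime x) & f = u * \prod_(x <- s) x].

Lemma pfactM a b : pfact a -> pfact b -> pfact (a * b).
Proof.
move=> [u [s [Hu Hs E]]] [v [t [Hv Ht F]]]; exists (u * v), (s ++ t); split.
- by rewrite unitrM Hu Hv.
- by move=> x; rewrite mem_cat => /orP [/Hs|/Ht].
- by rewrite E F big_cat /=; ring.
Qed.

Lemma poly_gufd : gufd {poly R}.
Proof.
suff H : forall k (f : {poly R}), (size f <= k)%N -> f != 0 -> pfact f.
  by move=> f f0; apply: (H (size f)).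
elim=> [|k IHk] f sf f0.
  by move: f0; rewrite -size_poly_gt0; case: (size f) sf.
have caseb : forall f, (size f <= k.+1)%N -> f != 0 -> prim f -> pfact f.
  move=> {sf f0} f sf f0 pf.
  have [sf1|sf2] := leqP (size f) 1.
    case: (boolP (f \is a GRing.unit)) => fU.
      by exists f, [::]; split => //; rewrite big_nil mulr1.
    have [y [py dy]] := const_prime_dvd sf1 f0 fU.
    by exfalso; apply: (pf y).
  case: (classic (pirr f)) => irr.
    exists 1, [:: f]; split; rewrite ?unitr1 ?big_seq1 ?mul1r //.
    by move=> x; rewrite inE => /eqP ->; apply: euclid_prime.
  have [a [b [Eab Hab]]] : exists a b, f = a * b /\ ~ (a \is a GRing.unit \/ b \is a GRing.unit).
    apply: NNPP => Hn; apply: irr => a b E; apply: NNPP => Hn2; apply: Hn; by exists a, b.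
  have a0 : a != 0 by apply: contra_neq f0 => a0; rewrite Eab a0 mul0r.
  have b0 : b != 0 by apply: contra_neq f0 => b0; rewrite Eab b0 mulr0.
  have big2 : forall c d, f = c * d -> c != 0 -> c \isn't a GRing.unit -> (1 < size c)%N.
    move=> c d E c0 cU; rewrite ltnNge; apply/negP => sc.
    have [y [py [z Ez]]] := const_prime_dvd sc c0 cU.
    by apply: (pf y py); exists (z * d); rewrite E Ez mulrA.
  have sa := big2 a b Eab a0 (introN idP (fun H => Hab (or_introl H))).
  have sb := big2 b a (etrans Eab (mulrC a b)) b0 (introN idP (fun H => Hab (or_intror H))).
  have Ef : size f = (size a + size b).-1 by rewrite Eab size_mul.
  rewrite Eab; apply: pfactM; apply: IHk => //; rewrite -ltnS; apply: leq_trans sf; rewrite Ef.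
    by move: sa sb; clear; lia.
  by move: sa sb; clear; lia.
have lc0 : lead_coef f != 0 by rewrite lead_coef_eq0.
have [u [s [Hu Hs Elc]]] := ufdR lc0.
suff main : forall N f u s, (size f <= k.+1)%N -> f != 0 -> u \is a GRing.unit ->
  (forall x, x \in s -> gprime x) -> lead_coef f = u * \prod_(x <- s) x -> (size s <= N)%N -> pfact f.
  exact: (main (size s) f u s).
move=> {u s Hu Hs Elc lc0 sf f0 f} N.
elim: N => [|N IHN] f u s sf f0 Hu Hs Elc HN.
  case: (classic (exists y, gprime y /\ gdvd y%:P f)) => [[y [py dy]]|nd]; last first.
    by apply: caseb => // y py dy; apply: nd; exists y.
  exfalso; have [f1 Ef1] := dy; have [y0 _ _] := py.
  have : gdvd y (u * \prod_(x <- s) x) by rewrite -Elc Ef1 lead_coefM lead_coefC; apply: gdvd_mulr; apply: gdvd_refl.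
  by case/(gprime_prod py Hu) => x; case: s HN {Hs Elc}.
case: (classic (exists y, gprime y /\ gdvd y%:P f)) => [[y [py dy]]|nd]; last first.
  by apply: caseb => // y py dy; apply: nd; exists y.
have [f1 Ef1] := dy; have [y0 _ _] := py.
have f10 : f1 != 0 by apply: contra_neq f0 => e; rewrite Ef1 e mulr0.
have : gdvd y (u * \prod_(x <- s) x) by rewrite -Elc Ef1 lead_coefM lead_coefC; apply: gdvd_mulr; apply: gdvd_refl.
case/(gprime_prod py Hu) => x xs [w Ew].
have wU : w \is a GRing.unit.
  apply: (gprime_irr (Hs x xs) Ew); by case: py.
have [u1 [s1 [Hu1 Hs1 E1]]] : pfact f1.
  apply: (IHN f1 (u * w) (rem x s) _ f10).
  - by rewrite -(size_Cmul f1 y0) -Ef1.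
  - by rewrite unitrM Hu wU.
  - by move=> z /mem_rem; apply: Hs.
  - have Ely : lead_coef f = y * lead_coef f1 by rewrite Ef1 lead_coefM lead_coefC.
    apply: (mulfI y0); rewrite -Ely Elc (big_rem x xs) /= Ew.
    ring.
  - by rewrite size_rem //; move: HN; case: (size s) => // ? ; rewrite ltnS.
exists u1, (y%:P :: s1); split => //.
  move=> z; rewrite inE => /orP [/eqP ->|/Hs1 //]; exact: polyC_gprime.
by rewrite Ef1 E1 big_cons; ring.
Qed.

End PolyUfd.

Lemma gufd_iso (R S : idomainType) (phi : {rmorphism R -> S}) (psi : {rmorphism S -> R}) :
  cancel phi psi -> cancel psi phi -> gufd R -> gufd S.
Proof.
move=> pK qK uR a a0.
have b0 : psi a != 0 by apply: contra_neq a0 => e; rewrite -[a]qK e rmorph0.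
have [u [s [Hu Hs E]]] := uR _ b0.
exists (phi u), (map phi s); split.
- exact: rmorph_unit.
- move=> x /mapP [y ys ->]; have [y0 yU yP] := Hs y ys; split.
  + by apply: contra_neq y0 => e; rewrite -[y]pK e rmorph0.
  + by apply: contra yU => /(rmorph_unit psi); rewrite pK.
  + move=> x1 x2 [z Ez].
    have : gdvd y (psi x1 * psi x2) by exists (psi z); rewrite -rmorphM Ez rmorphM pK.
    by case/yP => [[w Ew]|[w Ew]]; [left|right]; exists (phi w); rewrite -[LHS]qK Ew rmorphM.
- by rewrite -[a]qK E rmorphM rmorph_prod big_map.
Qed.

Section Iso.
Variables (K : fieldType).

Lemma mpoly_morph_eq k (S : nzRingType) (g1 g2 : {rmorphism {mpoly K[k]} -> S}) :
  (forall c, g1 c%:MP = g2 c%:MP) -> (forall i, g1 'X_i = g2 'X_i) -> g1 =1 g2.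
Proof.
move=> HC HX p.
have E : forall (g : {rmorphism {mpoly K[k]} -> S}) c (q : {mpoly K[k]}), g (c *: q) = g c%:MP * g q.
  move=> g c q; rewrite -(rmorphM g); congr (g _); by rewrite mul_mpolyC.
rewrite [p]mpolyE !raddf_sum; apply: eq_bigr => m _.
etransitivity; first exact: E.
symmetry; etransitivity; first exact: E.
rewrite HC mpolyXE_id !rmorph_prod; congr (_ * _).
by apply: eq_bigr => i _; rewrite !rmorphXn HX.
Qed.

Lemma mpoly0_gufd : gufd {mpoly K[0]}.
Proof.
move=> p p0; exists p, [::]; split; rewrite ?big_nil ?mulr1 //.
rewrite [p]nvar0_mpolyC in p0 *.
have c0 : p@_0 != 0 by rewrite mpolyC_eq0 in p0.
apply/unitrP; exists ((p@_0)^-1)%:MP; by rewrite -!mpolyCM mulVf ?mulfV.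
Qed.

Variable n : nat.

Definition hX (i : 'I_n.+1) : {poly {mpoly K[n]}} :=
  if unlift ord_max i is Some j then ('X_j)%:P else 'X.

Local Notation phiI := (mmap (polyC \o @mpolyC n K) hX).

Lemma commr_X : commr_rmorph (@mwiden n K) 'X_ord_max.
Proof. by move=> a; rewrite /GRing.comm mulrC. Qed.

Local Notation psiI := (horner_morph commr_X).

Lemma widen_lift (j : 'I_n) : widen_ord (leqnSn n) j = lift ord_max j.
Proof. by apply: val_inj; rewrite /= /bump leqNgt ltn_ord. Qed.

Lemma phiI_C c : phiI c%:MP = (c%:MP)%:P.
Proof. by rewrite mmapC. Qed.

Lemma phiI_X i : phiI 'X_i = hX i.
Proof. by rewrite mmapX mmap1U. Qed.

Lemma psiI_C c : psiI c%:P = mwiden c.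
Proof. by rewrite /horner_morph map_polyC hornerC. Qed.

Lemma psiI_X : psiI 'X = 'X_ord_max.
Proof. by rewrite /horner_morph map_polyX hornerX. Qed.

Lemma psiphi : cancel phiI psiI.
Proof.
have H := @mpoly_morph_eq n.+1 _ (psiI \o phiI) idfun.
move=> p; apply: H => [c|i].
  by change (psiI (phiI c%:MP) = c%:MP); rewrite phiI_C psiI_C mwidenC.
change (psiI (phiI 'X_i) = 'X_i).
rewrite phiI_X /hX; case: unliftP => [j ->|->].
  by rewrite psiI_C -widen_lift mwidenX mnmwiden1.
by rewrite psiI_X.
Qed.

Lemma phipsi : cancel psiI phiI.
Proof.
have Hc : forall c, phiI (mwiden c) = c%:P.
  have H := @mpoly_morph_eq n _ (phiI \o @mwiden n K) polyC.
  move=> c; apply: H => [c'|i].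
    by change (phiI (mwiden c'%:MP) = (c'%:MP)%:P); rewrite mwidenC phiI_C.
  change (phiI (mwiden 'X_i) = ('X_i)%:P).
  by rewrite mwidenX mnmwiden1 phiI_X /hX widen_lift liftK.
move=> p; rewrite -[p]coefK poly_def.
rewrite !raddf_sum; apply: eq_bigr => i _ /=.
rewrite -mul_polyC !rmorphM rmorphXn /= psiI_C psiI_X Hc rmorphXn.
congr (_ * _ ^+ _); etransitivity; first exact: phiI_X.
by rewrite /hX unlift_none.
Qed.

Lemma mpolyS_gufd : gufd {mpoly K[n]} -> gufd {mpoly K[n.+1]}.
Proof.
move=> H; apply: (gufd_iso (phi := psiI) (psi := phiI)); [exact: phipsi|exact: psiphi|].
exact: poly_gufd.
Qed.

End Iso.

Lemma mpoly_gufd (K : fieldType) n : gufd {mpoly K[n]}.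
Proof. elim: n => [|n IH]; [exact: mpoly0_gufd | exact: mpolyS_gufd]. Qed.

Section Syz.
Variables (K : fieldType) (n : nat).
Implicit Types p q A B a b : {mpoly K[n]}.

Lemma msize_gt0 p : p != 0 -> (0 < msize p)%N.
Proof. by move=> p0; rewrite lt0n msize_poly_eq0. Qed.

Lemma deg_mul p q : p != 0 -> q != 0 -> (msize (p * q)).-1 = ((msize p).-1 + (msize q).-1)%N.
Proof.
move=> p0 q0; rewrite msizeM //.
move: (msize_gt0 p0) (msize_gt0 q0); move: (mmeasure mdeg p) (mmeasure mdeg q) => x y; lia.
Qed.

Lemma deg_unit p : p \is a GRing.unit -> (msize p).-1 = 0%N.
Proof.
move=> pu; have p0 : p != 0 by apply: contraTneq pu => ->; rewrite unitr0.
have q0 : p^-1 != 0 by rewrite invr_eq0.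
have := deg_mul p0 q0; rewrite mulrV // msize1 /=.
by move/esym/eqP; rewrite addn_eq0 => /andP [/eqP -> _].
Qed.

Lemma syz_claim : forall (s : seq {mpoly K[n]}) u B a b,
  u \is a GRing.unit -> (forall x, x \in s -> gprime x) ->
  B != 0 -> a != 0 -> (u * \prod_(x <- s) x) * b = a * B ->
  exists C, [/\ gdvd C (u * \prod_(x <- s) x), gdvd C B &
     ((msize (u * \prod_(x <- s) x)).-1 <= (msize C).-1 + (msize a).-1)%N].
Proof.
elim=> [|y s IH] u B a b Hu Hs B0 a0 E.
  exists 1; split.
  - by exists (u * \prod_(x <- [::]) x); rewrite mul1r.
  - by exists B; rewrite mul1r.
  - by rewrite big_nil mulr1 (deg_unit Hu).
have Hy : gprime y by apply: Hs; rewrite inE eqxx.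
have [y0 yU yP] := Hy.
have Hs' : forall x, x \in s -> gprime x by move=> x xs; apply: Hs; rewrite inE xs orbT.
have u0 : u != 0 by apply: contraTneq Hu => ->; rewrite unitr0.
have P0 : u * \prod_(x <- s) x != 0.
  rewrite mulf_neq0 // prodf_seq_neq0; apply/allP => x xs; by case: (Hs' x xs).
have EA : u * \prod_(x <- y :: s) x = y * (u * \prod_(x <- s) x) by rewrite big_cons mulrCA.
rewrite EA in E *.
have : gdvd y (a * B) by rewrite -E -mulrA; apply: gdvd_mulr; apply: gdvd_refl.
case/yP => [[a' Ea']|[B' EB']].
  have a'0 : a' != 0 by apply: contra_neq a0 => e; rewrite Ea' e mulr0.
  have E' : (u * \prod_(x <- s) x) * b = a' * B.
    apply: (mulfI y0); transitivity (y * (u * \prod_(x <- s) x) * b); first ring.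
    etransitivity; first exact: E.
    rewrite Ea'; ring.
  have [C [H1 H2 H3]] := IH u B a' b Hu Hs' B0 a'0 E'.
  exists C; split => //; first by apply: gdvd_mull.
  by rewrite Ea' (deg_mul y0 a'0) (deg_mul y0 P0) addnCA leq_add2l.
have B'0 : B' != 0 by apply: contra_neq B0 => e; rewrite EB' e mulr0.
have E' : (u * \prod_(x <- s) x) * b = a * B'.
  apply: (mulfI y0); transitivity (y * (u * \prod_(x <- s) x) * b); first ring.
  etransitivity; first exact: E.
  rewrite EB'; ring.
have [C [H1 H2 H3]] := IH u B' a b Hu Hs' B'0 a0 E'.
have C0 : C != 0 by apply/eqP => C0; case: H1 => z Ez; move: P0; rewrite Ez C0 mul0r eqxx.
exists (y * C); split.
- by apply: gdvd_mul2.
- by rewrite EB'; apply: gdvd_mul2.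
- by rewrite (deg_mul y0 P0) (deg_mul y0 C0) -addnA leq_add2l.
Qed.

Lemma syz A B a b : A != 0 -> B != 0 -> a != 0 -> A * b = a * B ->
  exists C, [/\ gdvd C A, gdvd C B & ((msize A).-1 <= (msize C).-1 + (msize a).-1)%N].
Proof.
move=> A0 B0 a0 E; have [u [s [Hu Hs EA]]] := mpoly_gufd A0.
move: E; rewrite EA => E; exact: (syz_claim Hu Hs B0 a0 E).
Qed.

Lemma gdvd_deg C A : A != 0 -> gdvd C A -> ((msize C).-1 <= (msize A).-1)%N.
Proof.
move=> A0 [z Ez]; have C0 : C != 0 by apply: contra_neq A0 => e; rewrite Ez e mul0r.
have z0 : z != 0 by apply: contra_neq A0 => e; rewrite Ez e mulr0.
by rewrite Ez deg_mul // leq_addr.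
Qed.

End Syz.

Section Basic.
Variables (K : fieldType) (n : nat).
Implicit Types p q : {mpoly K[n]}.

Lemma msize_le_coef p k : (forall m, (k <= mdeg m)%N -> p@_m = 0) -> (msize p <= k)%N.
Proof.
move=> H; rewrite leqNgt; apply/negP => Hk.
have p0 : p != 0 by apply: contraTneq Hk => ->; rewrite msize0.
have := mlead_supp p0; rewrite mcoeff_msupp H ?eqxx //.
by rewrite -ltnS mlead_deg.
Qed.

Lemma coef_msize p k m : (msize p <= k)%N -> (k <= mdeg m)%N -> p@_m = 0.
Proof. by move=> H1 H2; apply: memN_msupp_eq0; apply: msize_mdeg_ge; apply: leq_trans H2. Qed.

Lemma ord_lt_msize p (z : int) (e : nat) : ord_lt p z -> z <= e%:Z -> (msize p <= e)%N.
Proof.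
move=> H ze; apply: msize_le_coef => m em; apply/eqP; rewrite -[_ == _]negbK -mcoeff_msupp.
apply/negP => /H; move: ze em; clear; lia.
Qed.

Lemma msize_ord_lt p (z : int) (e : nat) : (msize p <= e)%N -> e%:Z <= z -> ord_lt p z.
Proof.
move=> H ez J /msize_mdeg_lt HJ; move: (leq_trans HJ H) ez; clear; lia.
Qed.

Lemma ord_lt0 (z : int) : ord_lt (0 : {mpoly K[n]}) z.
Proof. by move=> J; rewrite msupp0. Qed.

Lemma coef_pihomog d p m : (pihomog mdeg d p)@_m = if mdeg m == d then p@_m else 0.
Proof.
pose k := maxn (msize p) (mdeg m).+1.
rewrite (@pihomogwE _ _ mdeg d k p) ?leq_maxl //.
rewrite big_mkcond /=.
have -> : \sum_(i : 'X_{1..n < k}) (if mdeg i == d then p@_i *: 'X_[i] else 0)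
   = \sum_(i : 'X_{1..n < k}) ((if mdeg i == d then p@_i else 0) *: 'X_[i]).
  by apply: eq_bigr => i _; case: ifP; rewrite ?scale0r.
by apply: (@mcoeff_mpoly n K (fun i => if mdeg i == d then p@_i else 0)); rewrite leq_max leqnn orbT.
Qed.

Lemma msize_sub_pihomog p k : (msize p <= k.+1)%N -> (msize (p - pihomog mdeg k p) <= k)%N.
Proof.
move=> H; apply: msize_le_coef => m km; rewrite mcoeffB coef_pihomog.
case: eqP => [_|ne]; first by rewrite subrr.
by rewrite (coef_msize H) ?subr0 // ltn_neqAle km andbT eq_sym; apply/eqP.
Qed.

Lemma homog_small p e : p \is e.-homog for mdeg -> (msize p <= e)%N -> p = 0.
Proof.
move=> hp Hs; apply/eqP; apply: contraTT Hs => p0; rewrite -ltnNge.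
have := dhomog_mf hp (mlead_supp p0) => <-.
by rewrite -ltnS mlead_deg.
Qed.

Lemma homog_msize p e : p != 0 -> p \is e.-homog for mdeg -> msize p = e.+1.
Proof.
move=> p0 hp; have := dhomog_msize hp => hp'.
have := dhomog_uniq p0 hp hp' => ->.
by rewrite prednK // lt0n msize_poly_eq0.
Qed.

Lemma Sym_neq0 p : p != 0 -> Sym p != 0.
Proof.
move=> p0; apply/eqP => /(congr1 (mcoeff (mlead p))).
rewrite [Sym p]/Sym -/(pihomog mdeg _ p) coef_pihomog mcoeff0.
rewrite -(mlead_deg p0) /= eqxx => /eqP; by rewrite mleadc_eq0 (negbTE p0).
Qed.

Lemma Sym_homog p : Sym p \is ((msize p).-1).-homog for mdeg.
Proof. exact: pihomogP. Qed.

Lemma msize_sub_Sym p : (msize (p - Sym p) <= (msize p).-1)%N.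
Proof. by apply: msize_sub_pihomog; rewrite leqSpred. Qed.

Lemma msize_mul_le p q : (msize (p * q) <= (msize p + msize q).-1)%N.
Proof.
have [->|p0] := eqVneq p 0; first by rewrite mul0r msize0.
have [->|q0] := eqVneq q 0; first by rewrite mulr0 msize0.
by rewrite msizeM.
Qed.

Lemma msize_mul_bnd p q a b c : (msize p <= a)%N -> (msize q <= b)%N ->
  q = 0 \/ p = 0 \/ ((a + b).-1 <= c)%N -> (msize (p * q) <= c)%N.
Proof.
move=> Hp Hq [->|[->|H]]; rewrite ?mulr0 ?mul0r ?msize0 //.
apply: leq_trans (msize_mul_le p q) _; apply: leq_trans H.
by rewrite -!subn1 leq_sub2r // leq_add.
Qed.

End Basic.

Section Ops.
Variables (K : fieldType) (n : nat) (der : 'I_n -> K -> K).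
Hypothesis Hadd : forall i a b, der i (a + b) = der i a + der i b.
Implicit Types P Q A B : {mpoly K[n]}.

Lemma derB i a b : der i (a - b) = der i a - der i b.
Proof. by have := Hadd i (a - b) b; rewrite subrK => ->; rewrite addrK. Qed.

Lemma sum_msupp_w (F : 'X_{1..n} -> K -> {mpoly K[n]}) (F0 : forall m, F m 0 = 0) P k :
  (msize P <= k)%N ->
  \sum_(m <- msupp P) F m P@_m = \sum_(m : 'X_{1..n < k}) F m P@_m.
Proof.
move=> le_pk; set I : subFinType _ := 'X_{1..n < k}.
rewrite (big_mksub I) ?msupp_uniq //=; first last.
  by move=> x /msize_mdeg_lt /leq_trans; apply.
rewrite big_rmcond //= => j /memN_msupp_eq0 ->.
by rewrite F0.
Qed.

Lemma sum_msuppB (F : 'X_{1..n} -> K -> {mpoly K[n]})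
  (FB : forall m a b, F m (a - b) = F m a - F m b) P Q :
  \sum_(m <- msupp (P - Q)) F m (P - Q)@_m =
  \sum_(m <- msupp P) F m P@_m - \sum_(m <- msupp Q) F m Q@_m.
Proof.
have F0 : forall m, F m 0 = 0 by move=> m; have := FB m 0 0; rewrite subrr => ->; rewrite subrr.
pose k := maxn (msize P) (maxn (msize Q) (msize (P - Q))).
rewrite (@sum_msupp_w F F0 (P - Q) k); last exact: leq_trans (leq_maxr _ _) (leq_maxr _ _).
rewrite (@sum_msupp_w F F0 P k); last exact: leq_maxl.
rewrite (@sum_msupp_w F F0 Q k); last exact: leq_trans (leq_maxl _ _) (leq_maxr _ _).
rewrite -sumrB; apply: eq_bigr => m _; by rewrite mcoeffB FB.
Qed.

Lemma coef_derB i P Q : coef_der der i (P - Q) = coef_der der i P - coef_der der i Q.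
Proof. by apply: (@sum_msuppB (fun m a => der i a *: 'X_[m])) => m a b; rewrite derB scalerBl. Qed.

Lemma lcompDB i P Q : lcompD der i (P - Q) = lcompD der i P - lcompD der i Q.
Proof. rewrite /lcompD coef_derB; ring. Qed.

Lemma iterB i k P Q : iter k (lcompD der i) (P - Q) = iter k (lcompD der i) P - iter k (lcompD der i) Q.
Proof. by elim: k => //= k ->; rewrite lcompDB. Qed.

Lemma foldrB (J : 'X_{1..n}) (l : seq 'I_n) P Q :
  foldr (fun i R => iter (J i) (lcompD der i) R) (P - Q) l =
  foldr (fun i R => iter (J i) (lcompD der i) R) P l - foldr (fun i R => iter (J i) (lcompD der i) R) Q l.
Proof. by elim: l => //= i l ->; rewrite iterB. Qed.

Lemma lcompDJB J P Q : lcompDJ der J (P - Q) = lcompDJ der J P - lcompDJ der J Q.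
Proof. exact: foldrB. Qed.

Lemma dcompBl A B P : dcomp der (A - B) P = dcomp der A P - dcomp der B P.
Proof. by apply: (@sum_msuppB (fun m a => a *: lcompDJ der m P)) => m a b; rewrite scalerBl. Qed.

Lemma dcompBr A P Q : dcomp der A (P - Q) = dcomp der A P - dcomp der A Q.
Proof. by rewrite /dcomp -sumrB; apply: eq_bigr => J _; rewrite lcompDJB scalerBr. Qed.

Lemma dcomp0r A : dcomp der A 0 = 0.
Proof. by have := dcompBr A 0 0; rewrite subrr => ->; rewrite subrr. Qed.

Lemma dcomp0l P : dcomp der 0 P = 0.
Proof. by rewrite /dcomp msupp0 big_nil. Qed.

Lemma msize_sum_le (I : eqType) (r : seq I) (F : I -> {mpoly K[n]}) c :
  (forall i, i \in r -> (msize (F i) <= c)%N) -> (msize (\sum_(i <- r) F i) <= c)%N.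
Proof.
move=> H; rewrite big_seq; apply: (big_ind (fun x => (msize x <= c)%N)) => //.
  by rewrite msize0.
move=> x y Hx Hy; apply: leq_trans (msizeD_le _ _) _; by rewrite geq_max Hx Hy.
Qed.

Lemma msizeD_bnd P Q c : (msize P <= c)%N -> (msize Q <= c)%N -> (msize (P + Q) <= c)%N.
Proof. by move=> Hx Hy; apply: leq_trans (msizeD_le _ _) _; rewrite geq_max Hx Hy. Qed.

Lemma msize_coef_der i P : (msize (coef_der der i P) <= msize P)%N.
Proof.
apply: msize_sum_le => m Hm; apply: leq_trans (msizeZ_le _ _) _.
by rewrite msizeX; apply: msize_mdeg_lt.
Qed.

Lemma msizeXi (i : 'I_n) k : msize ('X_i ^+ k : {mpoly K[n]}) = k.+1.
Proof. by rewrite mpolyXn msizeX mdegMn mdeg1 mul1n. Qed.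

Lemma iter_bnd i k P b : (msize P <= b.+1)%N ->
  (msize (iter k (lcompD der i) P - P * 'X_i ^+ k) <= k + b)%N /\
  (msize (iter k (lcompD der i) P) <= (k + b).+1)%N.
Proof.
move=> HP; elim: k => [|k [IH1 IH2]] /=.
  by rewrite expr0 mulr1 subrr msize0.
set Qk := iter k (lcompD der i) P in IH1 IH2 *.
have E : lcompD der i Qk - P * 'X_i ^+ k.+1 = (Qk - P * 'X_i ^+ k) * 'X_i + coef_der der i Qk.
  by rewrite /lcompD exprSr; ring.
split.
  rewrite E; apply: msizeD_bnd.
    apply: (msize_mul_bnd IH1 (_ : (msize ('X_i : {mpoly K[n]}) <= 2)%N)).
      by rewrite msizeX mdeg1.
    by right; right; rewrite addn2 /= addSn.
  by apply: leq_trans (msize_coef_der _ _) _; rewrite addSn.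
rewrite /lcompD; apply: msizeD_bnd.
  apply: (msize_mul_bnd IH2 (_ : (msize ('X_i : {mpoly K[n]}) <= 2)%N)).
    by rewrite msizeX mdeg1.
  by right; right; rewrite addn2 /= !addSn.
by apply: leq_trans (msize_coef_der _ _) _; rewrite addSn ltnW.
Qed.

Lemma foldr_bnd (J : 'X_{1..n}) (l : seq 'I_n) P b : (msize P <= b.+1)%N ->
  (msize (foldr (fun i R => iter (J i) (lcompD der i) R) P l - P * \prod_(i <- l) 'X_i ^+ J i)
     <= \sum_(i <- l) J i + b)%N /\
  (msize (foldr (fun i R => iter (J i) (lcompD der i) R) P l) <= (\sum_(i <- l) J i + b).+1)%N.
Proof.
move=> HP; elim: l => [|i l [IH1 IH2]] /=.
  by rewrite big_nil mulr1 subrr msize0 big_nil add0n.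
set Q := foldr _ P l in IH1 IH2 *.
have [H1 H2] := iter_bnd i (J i) IH2.
have E : iter (J i) (lcompD der i) Q - P * \prod_(j <- i :: l) 'X_j ^+ J j =
  (iter (J i) (lcompD der i) Q - Q * 'X_i ^+ J i) + (Q - P * \prod_(j <- l) 'X_j ^+ J j) * 'X_i ^+ J i.
  by rewrite big_cons; ring.
rewrite E big_cons; split.
  apply: msizeD_bnd; first by rewrite -addnA.
  apply: (msize_mul_bnd IH1 (eq_leq (msizeXi i (J i)))).
  by right; right; rewrite addnS /= addnC addnA.
by rewrite -addnA.
Qed.

Lemma lcompDJ_bnd J P b : (msize P <= b.+1)%N ->
  (msize (lcompDJ der J P - 'X_[J] * P) <= mdeg J + b)%N.
Proof.
move=> HP; have [H1 _] := foldr_bnd J (enum 'I_n) HP.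
have E1 : \prod_(i <- enum 'I_n) ('X_i ^+ J i : {mpoly K[n]}) = 'X_[J].
  rewrite mpolyXE_id (big_enum _ _ 'I_n); by apply: eq_bigl => i; rewrite inE.
have E2 : (\sum_(i <- enum 'I_n) J i)%N = mdeg J.
  rewrite mdegE (big_enum _ _ 'I_n); by apply: eq_bigl => i; rewrite inE.
by move: H1; rewrite E1 E2 mulrC.
Qed.

Lemma dcomp_err A B a b : (msize A <= a.+1)%N -> (msize B <= b.+1)%N ->
  (msize (dcomp der A B - A * B) <= a + b)%N.
Proof.
move=> HA HB.
have -> : A * B = \sum_(J <- msupp A) A@_J *: ('X_[J] * B).
  rewrite {1}[A]mpolyE mulr_suml; apply: eq_bigr => J _; by rewrite scalerAl.
rewrite /dcomp -sumrB; apply: msize_sum_le => J HJ.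
rewrite -scalerBr; apply: leq_trans (msizeZ_le _ _) _.
apply: leq_trans (lcompDJ_bnd J HB) _; rewrite leq_add2r -ltnS.
exact: leq_trans (msize_mdeg_lt HJ) HA.
Qed.

End Ops.

Lemma msizeB_bnd (K : fieldType) n (P Q : {mpoly K[n]}) c :
  (msize P <= c)%N -> (msize Q <= c)%N -> (msize (P - Q) <= c)%N.
Proof. by move=> H1 H2; apply: msizeD_bnd => //; rewrite msizeN. Qed.

Lemma Sym0 (K : fieldType) n : Sym (0 : {mpoly K[n]}) = 0.
Proof. by rewrite /Sym msupp0 big_nil. Qed.

Lemma msize_eq0 (K : fieldType) n (P : {mpoly K[n]}) : (msize P <= 0)%N -> P = 0.
Proof. by rewrite leqn0 msize_poly_eq0 => /eqP. Qed.

Lemma sym_size (K : fieldType) n (F S : {mpoly K[n]}) e :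
  Sym F = S -> S != 0 -> S \is e.-homog for mdeg ->
  (msize F <= e.+1)%N /\ (msize (F - S) <= e)%N.
Proof.
move=> HS S0 hS.
have F0 : F != 0 by apply: contra_neq S0 => F0; rewrite -HS F0 Sym0.
have E : (msize F).-1 = e.
  apply: (dhomog_uniq S0 _ hS); rewrite -HS; exact: Sym_homog.
split; first by rewrite -E leqSpred.
by rewrite -HS -E; apply: msize_sub_Sym.
Qed.

Unset Implicit Arguments. Set Strict Implicit.

Theorem mainTheorem2 (K : fieldType) (n : nat) (der : 'I_n -> K -> K)
    (L S1 S2 S0 : {mpoly K[n]}) (d d1 d2 d0 t : nat)
    (F1 F2 F1' F2' F1'' F2'' : {mpoly K[n]}) :
  commuting_derivations der ->
  ord_eq L d ->
  Sym L = S1 * S2 ->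
  S1 \is @ishomog1 n K d1 mdeg ->
  S2 \is @ishomog1 n K d2 mdeg ->
  is_gcd S1 S2 S0 ->
  (msize S0).-1 = d0 ->
  (1 <= t)%N -> t%:Z <= d%:Z - d0%:Z ->
  partial_fact der L F1 F2 S1 S2 t ->
  partial_fact der L F1' F2' S1 S2 t.-1 ->
  extends F1 F2 F1' F2' t d d1 d2 ->
  partial_fact der L F1'' F2'' S1 S2 t.-1 ->
  extends F1 F2 F1'' F2'' t d d1 d2 ->
  ord_lt (F1' - F1'') (t.-1%:Z - (d%:Z - d1%:Z)) /\
  ord_lt (F2' - F2'') (t.-1%:Z - (d%:Z - d2%:Z)).
Proof.
move=> [Hadd _ _] [L0 HL] HSym hS1 hS2 [g01 g02 g0] Hd0 t1 Ht _ [Sy1' Sy2' Hp'] [Ex1' Ex2']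
  [Sy1'' Sy2'' Hp''] [Ex1'' Ex2''].
have SL0 := Sym_neq0 L0.
have S10 : S1 != 0 by apply: contra_neq SL0 => e; rewrite HSym e mul0r.
have S20 : S2 != 0 by apply: contra_neq SL0 => e; rewrite HSym e mulr0.
have dd : d = (d1 + d2)%N.
  apply: (@dhomog_uniq _ _ mdeg _ _ _ SL0); first by have := Sym_homog L; rewrite HL.
  rewrite HSym; exact: dhomogM.
have [HF1a HF1b] := sym_size Sy1' S10 hS1.
have [HF2a HF2b] := sym_size Sy2'' S20 hS2.
have mS1 := homog_msize S10 hS1.
have mS2 := homog_msize S20 hS2.
pose G1 := F1' - F1''; pose G2 := F2' - F2''.
pose e1 := (t - d2)%N; pose e2 := (t - d1)%N.
have HG1 : (msize G1 <= e1)%N.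
  have -> : G1 = (F1 - F1'') - (F1 - F1') by rewrite /G1; ring.
  apply: msizeB_bnd; [apply: (ord_lt_msize Ex1'') | apply: (ord_lt_msize Ex1')];
  rewrite /e1 dd; move: t1; clear; lia.
have HG2 : (msize G2 <= e2)%N.
  have -> : G2 = (F2 - F2'') - (F2 - F2') by rewrite /G2; ring.
  apply: msizeB_bnd; [apply: (ord_lt_msize Ex2'') | apply: (ord_lt_msize Ex2')];
  rewrite /e2 dd; move: t1; clear; lia.
have G1c : G1 = 0 \/ (d2 <= t.-1)%N.
  case: (leqP d2 t.-1) => H; [by right | left]; apply: msize_eq0.
  by apply: leq_trans HG1 _; rewrite /e1; move: H t1; clear; lia.
have G2c : G2 = 0 \/ (d1 <= t.-1)%N.
  case: (leqP d1 t.-1) => H; [by right | left]; apply: msize_eq0.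
  by apply: leq_trans HG2 _; rewrite /e2; move: H t1; clear; lia.
pose k1 := (t.-1 - d2)%N; pose k2 := (t.-1 - d1)%N.
pose g1 := pihomog mdeg k1 G1; pose g2 := pihomog mdeg k2 G2.
have HG1' : (msize G1 <= k1.+1)%N by apply: leq_trans HG1 _; rewrite /e1 /k1; move: t1; clear; lia.
have HG2' : (msize G2 <= k2.+1)%N by apply: leq_trans HG2 _; rewrite /e2 /k2; move: t1; clear; lia.
have Hg1 : (msize (G1 - g1) <= k1)%N by apply: msize_sub_pihomog.
have Hg2 : (msize (G2 - g2) <= k2)%N by apply: msize_sub_pihomog.
pose Y := S1 * g2 + g1 * S2.
have hY : Y \is (t.-1).-homog for mdeg.
  apply: dhomogD.
    case: G2c => [G20|H].
      by rewrite /g2 G20 pihomog0 mulr0 dhomog0.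
    have -> : t.-1 = (d1 + k2)%N by rewrite /k2 subnKC.
    by apply: dhomogM => //; apply: pihomogP.
  case: G1c => [G10|H].
    by rewrite /g1 G10 pihomog0 mul0r dhomog0.
  have -> : t.-1 = (k1 + d2)%N by rewrite /k1 subnK.
  by apply: dhomogM => //; apply: pihomogP.
pose D := dcomp der F1' F2' - dcomp der F1'' F2''.
have HD : (msize D <= t.-1)%N.
  have -> : D = (L - dcomp der F1'' F2'') - (L - dcomp der F1' F2') by rewrite /D; ring.
  apply: msizeB_bnd; [apply: (ord_lt_msize Hp'') | apply: (ord_lt_msize Hp')]; by [].
have ED : D = dcomp der F1' G2 + dcomp der G1 F2''.
  by rewrite /G1 /G2 dcompBr // dcompBl // /D; ring.
have EY : Y = D - (dcomp der F1' G2 - F1' * G2) - (dcomp der G1 F2'' - G1 * F2'')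
   - ((F1' - S1) * G2 + S1 * (G2 - g2) + (G1 - g1) * S2 + G1 * (F2'' - S2)).
  by rewrite ED /Y; ring.
have HY : (msize Y <= t.-1)%N.
  rewrite EY; apply: msizeB_bnd; first apply: msizeB_bnd; first apply: msizeB_bnd.
  - exact: HD.
  - case: G2c => [G20|H].
      by rewrite G20 dcomp0r // mulr0 subrr msize0.
    have := dcomp_err der HF1a HG2'.
    by rewrite /k2 subnKC.
  - case: G1c => [G10|H].
      by rewrite G10 dcomp0l mul0r subrr msize0.
    have := dcomp_err der HG1' HF2a.
    by rewrite /k1 subnK.
  - apply: msizeD_bnd; first apply: msizeD_bnd; first apply: msizeD_bnd.
    + apply: (msize_mul_bnd HF1b HG2); case: G2c => [G20|H]; [by left|right; right].
      by rewrite /e2; move: H t1; clear; lia.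
    + apply: (msize_mul_bnd (eq_leq mS1) Hg2); case: G2c => [G20|H].
        by left; rewrite /g2 G20 pihomog0 subrr.
      by right; right; rewrite /k2; move: H t1; clear; lia.
    + apply: (msize_mul_bnd Hg1 (eq_leq mS2)); case: G1c => [G10|H].
        by right; left; rewrite /g1 G10 pihomog0 subrr.
      by right; right; rewrite /k1; move: H t1; clear; lia.
    + apply: (msize_mul_bnd HG1 HF2b); case: G1c => [G10|H]; [by right; left|right; right].
      by rewrite /e1; move: H t1; clear; lia.
have Y0 : Y = 0 by apply: homog_small hY HY.
have S00 : S0 != 0 by apply: contra_neq S10 => e; case: g01 => z ->; rewrite e mul0r.
have ES : S1 * g2 = (- g1) * S2.
  by move: Y0; rewrite /Y => /eqP; rewrite addr_eq0 mulNr => /eqP.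
have ES' : S2 * g1 = (- g2) * S1.
  transitivity (- ((- g1) * S2)); first ring.
  rewrite -ES; ring.
have kill : forall (A B a b : {mpoly K[n]}) (dA k : nat), A != 0 -> B != 0 ->
    A \is dA.-homog for mdeg -> (forall C, gdvd C A -> gdvd C B -> gdvd C S0) ->
    A * b = (- a) * B -> a \is k.-homog for mdeg -> (d0 + k < dA)%N -> a = 0.
  move=> A B a b dA k A0 B0 hA gAB E ha lt.
  apply/eqP; apply: contraTT lt => a0; rewrite -leqNgt.
  have na0 : - a != 0 by rewrite oppr_eq0.
  have [C [C1 C2 C3]] := syz A0 B0 na0 E.
  have := gdvd_deg S00 (gAB C C1 C2); rewrite Hd0 => HC.
  move: C3; rewrite msizeN (homog_msize A0 hA) (homog_msize a0 ha) /= => C3.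
  apply: leq_trans C3 _; by rewrite leq_add2r.
have g10 : g1 = 0.
  case: G1c => [G10|H]; first by rewrite /g1 G10 pihomog0.
  apply: (kill S1 S2 g1 g2 d1 k1 S10 S20 hS1 _ ES).
  - by move=> C h1 h2; apply: g0.
  - by apply: pihomogP.
  - rewrite /k1; move: H Ht t1; rewrite dd; clear; lia.
have g20 : g2 = 0.
  case: G2c => [G20|H]; first by rewrite /g2 G20 pihomog0.
  apply: (kill S2 S1 g2 g1 d2 k2 S20 S10 hS2 _ ES').
  - by move=> C h1 h2; apply: g0.
  - by apply: pihomogP.
  - rewrite /k2; move: H Ht t1; rewrite dd; clear; lia.
split.
  case: G1c => [G10|H]; first by rewrite -/G1 G10; apply: ord_lt0.
  apply: (msize_ord_lt (e := k1)); first by move: Hg1; rewrite g10 subr0.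
  rewrite /k1 dd; move: H t1; clear; lia.
case: G2c => [G20|H]; first by rewrite -/G2 G20; apply: ord_lt0.
apply: (msize_ord_lt (e := k2)); first by move: Hg2; rewrite g20 subr0.
rewrite /k2 dd; move: H t1; clear; lia.
Qed.
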